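(* Let $\mathcal{D}$ be a geographic domain (a measurable subset of $\mathbb{R}^d$, e.g. $d=2$) with finite area $|\mathcal{D}|=\int_{\mathcal{D}}1\,dz>0$, and let $x:\mathcal{D}\to\mathbb{R}^p$ be a feature map. Suppose we observe $n_1$ presence points $z_1,\dots,z_{n_1}\in\mathcal{D}$ (indexed by $y_i=1$) and $n_0$ background points $z_{n_1+1},\dots,z_{n_1+n_0}\in\mathcal{D}$ (indexed by $y_i=0$), with $x_i=x(z_i)$. Let $\{f_\theta:\theta\in\mathbb{R}^d\}$ be a parametric family of real-valued functions and $J(\theta)$ a penalty function. Define $$g_1(\alpha,\theta)=\Big(\sum_{i:y_i=1}\alpha+f_\theta(x_i)\Big)-\int_{\mathcal{D}}e^{\alpha+f_\theta(x(z))}\,dz-J(\theta)-\log n_1!,$$ the penalized log-likelihood of an inhomogeneous Poisson process with intensity $e^{\alpha+f_\theta(x(z))}$, and $$g_2(\theta)=\sum_{i:y_i=1}f_\theta(x_i)-n_1\log\Big(\int_{\mathcal{D}}e^{f_\theta(x(z))}\,dz\Big)-J(\theta),$$ the penalized log-likelihood of an i.i.d. sample with density proportional to $e^{f_\theta(x(z))}$ (assuming the integrals are finite). Then $\theta$ maximizes $g_2$ if and only if $(\alpha,\theta)$ maximizes $g_1$ for some $\alpha\in\mathbb{R}$. The same conclusion holds if the integrals $\int_{\mathcal{D}}e^{\alpha+f_\theta(x(z))}dz$ and $\int_{\mathcal{D}}e^{f_\theta(x(z))}dz$ are replaced by the background-sample sums $\frac{|\mathcal{D}|}{n_0}\sum_{i:y_i=0}e^{\alpha+f_\theta(x_i)}$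 and $\frac{|\mathcal{D}|}{n_0}\sum_{i:y_i=0}e^{f_\theta(x_i)}$ respectively.
   Context: Here $g_1$ is the (penalized) inhomogeneous Poisson process (IPP) log-likelihood and $g_2$ is the (penalized) Maxent log-likelihood; the intercept $\alpha$ is not penalized. *)

(* Defs.v *)
From HB Require Import structures.
From mathcomp Require Import all_boot all_order all_algebra.
From mathcomp Require Import all_classical all_reals all_analysis.
Set Implicit Arguments. Unset Strict Implicit. Unset Printing Implicit Defensive.
Import Order.TTheory GRing.Theory Num.Theory.
Local Open Scope ring_scope.

Section Likelihoods.
Context {R : realType} {dsp : measure_display} {T : measurableType dsp}.
Context {p q : nat}.
(* mu : the measure dz on the domain space; D : the geographic domain;
   x : feature map; f : parametric family f_theta; J : penalty;
   z1 : the n1 presence points; z0 : the n0 background points. *)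
Variables (mu : {measure set T -> \bar R}) (D : set T)
  (x : T -> 'rV[R]_p) (f : 'rV[R]_q -> 'rV[R]_p -> R) (J : 'rV[R]_q -> R).
Variables (n1 n0 : nat) (z1 : 'I_n1 -> T) (z0 : 'I_n0 -> T).

Definition area : R := fine (mu D).

Definition g1 (a : R) (th : 'rV[R]_q) : R :=
  (\sum_(i < n1) (a + f th (x (z1 i))))
  - Rintegral mu D (fun z => expR (a + f th (x z)))
  - J th - ln (n1`!%:R).

Definition g2 (th : 'rV[R]_q) : R :=
  (\sum_(i < n1) f th (x (z1 i)))
  - n1%:R * ln (Rintegral mu D (fun z => expR (f th (x z))))
  - J th.

Definition g1_bg (a : R) (th : 'rV[R]_q) : R :=
  (\sum_(i < n1) (a + f th (x (z1 i))))
  - area / n0%:R * (\sum_(i < n0) expR (a + f th (x (z0 i))))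
  - J th - ln (n1`!%:R).

Definition g2_bg (th : 'rV[R]_q) : R :=
  (\sum_(i < n1) f th (x (z1 i)))
  - n1%:R * ln (area / n0%:R * (\sum_(i < n0) expR (f th (x (z0 i)))))
  - J th.

End Likelihoods.

Definition maximizes1 {A : Type} {R : realType} (g : A -> R) (t : A) : Prop :=
  forall t', (g t' <= g t)%R.

Definition maximizes2 {A B : Type} {R : realType} (g : A -> B -> R)
  (a : A) (t : B) : Prop :=
  forall a' t', (g a' t' <= g a t)%R.

(* Main.v *)
Require Import Defs.
From HB Require Import structures.
From mathcomp Require Import all_boot all_order all_algebra.
From mathcomp Require Import all_classical all_reals all_analysis.
From mathcomp Require Import lra.
Import Order.TTheory GRing.Theory Num.Theory.
Local Open Scope ring_scope.

Lemma key_ineq (R : realType) (n K a : R) : 0 < n -> 0 < K ->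
  n * a - expR a * K <= n * ln n - n * ln K - n.
Proof.
move=> n0 K0.
have t0 : 0 < expR a * K / n by rewrite divr_gt0 // mulr_gt0 // expR_gt0.
have := expR_ge1Dx (ln (expR a * K / n)).
rewrite lnK ?posrE // lnM ?posrE ?mulr_gt0 ?expR_gt0 ?invr_gt0 // lnM ?posrE ?expR_gt0 //.
rewrite expRK lnV ?posrE // => H.
have H2 : n * (1 + (a + ln K + - ln n)) <= n * (expR a * K / n).
  by rewrite ler_pM2l.
move: H2; rewrite mulrCA mulfV ?gt_eqF // mulr1 => H2.
lra.
Qed.

Lemma key_eq (R : realType) (n K : R) : 0 < n -> 0 < K ->
  n * (ln n - ln K) - expR (ln n - ln K) * K = n * ln n - n * ln K - n.
Proof.
move=> n0 K0.
rewrite expRD expRN !lnK ?posrE // mulfVK ?gt_eqF //.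
by rewrite mulrBr.
Qed.

Lemma equiv_max (R : realType) (B : Type) (G1 : R -> B -> R) (G2 : B -> R) c :
  (forall a t, G1 a t <= G2 t + c) -> (forall t, exists a, G1 a t = G2 t + c) ->
  forall th, maximizes1 G2 th <-> exists a, maximizes2 G1 a th.
Proof.
move=> le ex th; split.
  move=> M; have [a Ha] := ex th; exists a => a' t'.
  by rewrite Ha (le_trans (le a' t')) // lerD2r M.
move=> [a M] t'; have [a' Ha'] := ex t'.
have := M a' t'; rewrite Ha' => H.
have := le a th; move: H; lra.
Qed.

Lemma general (R : realType) (B : Type) (n : R) (I S Jf : B -> R) (L : R)
  (G1 : R -> B -> R) (G2 : B -> R) :
  0 < n -> (forall t, 0 < I t) ->
  (forall a t, G1 a t = n * a - expR a * I t + S t - Jf t - L) ->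
  (forall t, G2 t = S t - n * ln (I t) - Jf t) ->
  forall th, maximizes1 G2 th <-> exists a, maximizes2 G1 a th.
Proof.
move=> n0 I0 E1 E2; apply: (@equiv_max R B G1 G2 (n * ln n - n - L)).
  move=> a t; rewrite E1 E2; have := @key_ineq R n (I t) a n0 (I0 t); lra.
move=> t; exists (ln n - ln (I t)); rewrite E1 E2.
have := @key_eq R n (I t) n0 (I0 t); lra.
Qed.
Lemma Rint_gt0 (R : realType) (dsp : measure_display) (T : measurableType dsp)
  (mu : {measure set T -> \bar R}) (D : set T) (g : T -> R) :
  measurable D -> (0 < mu D)%E -> (forall z, 0 < g z) ->
  mu.-integrable D (fun z => (g z)%:E) -> 0 < Rintegral mu D g.
Proof.
move=> mD muD g0 ig.
have mg := measurable_int mu ig.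
have ge0 : (0 <= \int[mu]_(z in D) (g z)%:E)%E.
  by apply: integral_ge0 => z _; rewrite lee_fin ltW.
have fin : (\int[mu]_(z in D) (g z)%:E)%E \is a fin_num.
  exact: (integrable_fin_num mD ig).
rewrite lt_def; apply/andP; split; last first.
  by rewrite /Rintegral fine_ge0.
apply/negP => /eqP H.
have I0 : (\int[mu]_(z in D) `|(g z)%:E|)%E = 0%E.
  transitivity (\int[mu]_(z in D) (g z)%:E)%E.
    by apply: eq_integral => z _; rewrite gee0_abs // lee_fin ltW.
  by rewrite -(fineK fin) /Rintegral in H *; rewrite H.
have [N [mN muN sub]] := (ae_eq_integral_abs mu mD mg).1 I0.
have DN : (D `<=` N)%classic.
  move=> z Dz; apply: sub => /= Hz.
  have := Hz Dz; rewrite /cst => -[]; move: (g0 z); lra.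
have := le_measure mu (mem_set mD) (mem_set mN) DN.
move=> le; have h : (0 < mu N)%E := lt_le_trans muD le.
by rewrite muN ltxx in h.
Qed.
Theorem proposition1 (R : realType) (dsp : measure_display) (T : measurableType dsp)
  (p q : nat) (mu : {measure set T -> \bar R}) (D : set T)
  (x : T -> 'rV[R]_p) (f : 'rV[R]_q -> 'rV[R]_p -> R) (J : 'rV[R]_q -> R)
  (n1 n0 : nat) (z1 : 'I_n1 -> T) (z0 : 'I_n0 -> T) :
  measurable D ->
  (0 < mu D)%E -> (mu D < +oo)%E ->
  (0 < n1)%N -> (0 < n0)%N ->
  (forall i, D (z1 i)) -> (forall i, D (z0 i)) ->
  ((forall th, mu.-integrable D (fun z => (expR (f th (x z)))%:E)) ->
   forall th,
     maximizes1 (g2 mu D x f J z1) th <->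
     exists a : R, maximizes2 (g1 mu D x f J z1) a th)
  /\
  (forall th,
     maximizes1 (g2_bg mu D x f J z1 z0) th <->
     exists a : R, maximizes2 (g1_bg mu D x f J z1 z0) a th).
Proof.
move=> mD muD0 muDoo n1p n0p _ _.
have n1R : 0 < (n1%:R : R) by rewrite ltr0n.
have sumE : forall a th,
  \sum_(i < n1) (a + f th (x (z1 i))) = n1%:R * a + \sum_(i < n1) f th (x (z1 i)).
  by move=> a th; rewrite big_split /= sumr_const card_ord mulr_natl.
split.
  move=> ig th.
  apply: (@general R _ n1%:R (fun t => Rintegral mu D (fun z => expR (f t (x z))))
    (fun t => \sum_(i < n1) f t (x (z1 i))) J (ln (n1`!%:R))) => //.
  - by move=> t; apply: Rint_gt0 => // z; exact: expR_gt0.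
  - move=> a t; rewrite /g1 sumE.
    have -> : Rintegral mu D (fun z => expR (a + f t (x z))) =
      expR a * Rintegral mu D (fun z => expR (f t (x z))).
      rewrite -RintegralZl //; last exact: ig.
      by congr Rintegral; apply: funext => z; rewrite expRD.
    lra.
apply: (@general R _ n1%:R (fun t => area mu D / n0%:R * \sum_(i < n0) expR (f t (x (z0 i))))
    (fun t => \sum_(i < n1) f t (x (z1 i))) J (ln (n1`!%:R))) => //.
- move=> t; apply: mulr_gt0; first apply: divr_gt0.
  + by apply: fine_gt0; rewrite muD0 muDoo.
  + by rewrite ltr0n.
  + rewrite (bigD1 (Ordinal n0p)) //=; apply: (lt_le_trans (expR_gt0 (f t (x (z0 (Ordinal n0p)))))).
    rewrite lerDl.
    by apply: sumr_ge0 => i _; apply: ltW; exact: expR_gt0.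
- move=> a t; rewrite /g1_bg sumE.
  have -> : \sum_(i < n0) expR (a + f t (x (z0 i))) =
      expR a * \sum_(i < n0) expR (f t (x (z0 i))).
    by rewrite mulr_sumr; apply: eq_bigr => i _; rewrite expRD.
  set A := area mu D / n0%:R. set Sm := \sum_(i < n0) _.
  rewrite mulrCA. lra.
Qed.
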